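(* Let $\alpha$ and $\gamma$ be compositions such that $\bm\lambda(\alpha)=\bm\lambda(\gamma)$ and $\alpha\ne\gamma$. Then $K_{\alpha,\gamma}=0$, i.e., there is no composition tableau of shape $\alpha$ and content $\gamma$.
   Context: A composition is a finite sequence of positive integers; $\bm\lambda(\alpha)$ denotes the partition obtained by sorting the parts of $\alpha$ in weakly decreasing order. The diagram of a composition $\alpha=(\alpha_1,\dots,\alpha_\ell)$ has $\alpha_i$ cells in row $i$ (rows numbered from the top, cells $(i,j)$ in matrix notation). A composition tableau of shape $\alpha$ is a filling $T$ of the cells with positive integers such that: (CT1) entries weakly decrease left to right along each row; (CT2) entries of the leftmost column strictly increase from top to bottom; (CT3, triple rule) for any two cells $(i,k)$, $(j,k)$ of the diagram with $i<j$: if $\alpha_i\ge\alpha_j$ (and $k\ge2$) then $T(j,k)<T(i,k)$ or $T(i,k-1)<T(j,k)$; if $\alpha_i<\alpha_j$ then $T(j,k)<T(i,k)$ or $T(i,k)<T(j,k+1)$. A tableau has content $\gamma=(\gamma_1,\dots,\gamma_m)$ if for each $1\le i\le m$ the value $i$ occurs exactly $\gamma_i$ times and no other values occur. $K_{\alpha,\gamma}$ is the number of composition tableaux of shape $\alpha$ and content $\gamma$. *)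

(* Defs.v *)
From mathcomp Require Import all_boot.
Set Implicit Arguments. Unset Strict Implicit. Unset Printing Implicit Defensive.

Definition is_composition (a : seq nat) : Prop := all (fun x => 0 < x) a.

Definition comp_partition (a : seq nat) : seq nat := sort geq a.

(* Cells are 0-indexed: (i, j) with i < size a and j < nth 0 a i.
   Paper's cell (i+1, j+1) corresponds to our (i, j). *)
Definition in_diagram (a : seq nat) (i j : nat) : bool :=
  (i < size a) && (j < nth 0 a i).

(* A filling is a function nat -> nat -> nat; only values on the diagram matter. *)
Definition is_comp_tableau (a : seq nat) (T : nat -> nat -> nat) : Prop :=
  (forall i j, in_diagram a i j -> 0 < T i j) /\
  (forall i j, in_diagram a i j.+1 -> T i j.+1 <= T i j) /\
  (forall i, i.+1 < size a -> T i 0 < T i.+1 0) /\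
  (forall i j k, i < j -> in_diagram a i k -> in_diagram a j k ->
     (nth 0 a j <= nth 0 a i -> 0 < k ->
        T j k < T i k \/ T i k.-1 < T j k) /\
     (nth 0 a i < nth 0 a j ->
        T j k < T i k \/ T i k < T j k.+1)).

Definition count_entry (a : seq nat) (T : nat -> nat -> nat) (v : nat) : nat :=
  \sum_(i < size a) \sum_(j < nth 0 a i) (T i j == v).

Definition has_content (a : seq nat) (T : nat -> nat -> nat) (g : seq nat) : Prop :=
  (forall v, 1 <= v <= size g -> count_entry a T v = nth 0 g v.-1) /\
  (forall i j, in_diagram a i j -> 1 <= T i j <= size g).

(* Main.v *)
Require Import Defs.
From mathcomp Require Import all_boot.
From mathcomp Require Import zify.

Lemma perm_sum (F : nat -> nat) (s t : seq nat) : perm_eq s t ->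
  \sum_(i < size s) F (nth 0 s i) = \sum_(i < size t) F (nth 0 t i).
Proof.
move=> Hp.
rewrite -(big_mkord xpredT (fun i => F (nth 0 s i))) -(big_mkord xpredT (fun i => F (nth 0 t i))).
rewrite -!(big_nth 0 xpredT F).
exact: perm_big.
Qed.

Lemma strict_sum (f g : nat -> nat) n r :
  (forall i, i < n -> f i <= g i) -> r < n -> f r < g r ->
  \sum_(i < n) f i < \sum_(i < n) g i.
Proof.
move=> Hle Hr Hlt.
rewrite (bigD1 (Ordinal Hr)) //= [X in _ < X](bigD1 (Ordinal Hr)) //=.
have : \sum_(i < n | i != Ordinal Hr) f i <= \sum_(i < n | i != Ordinal Hr) g i.
  by apply: leq_sum => i _; apply: Hle.
move=> H; rewrite -addSn; exact: leq_add Hlt H.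
Qed.

Lemma row_le a (T : nat -> nat -> nat) v r : r < size a ->
  \sum_(j < nth 0 a r) (T r j == v) <= count_entry a T v.
Proof.
move=> Hr; rewrite /count_entry (bigD1 (Ordinal Hr)) //=; exact: leq_addr.
Qed.

Lemma row2_le a (T : nat -> nat -> nat) v r s : r < size a -> s < size a -> r != s ->
  \sum_(j < nth 0 a r) (T r j == v) + \sum_(j < nth 0 a s) (T s j == v)
    <= count_entry a T v.
Proof.
move=> Hr Hs Hrs; rewrite /count_entry (bigD1 (Ordinal Hr)) //=.
rewrite (bigD1 (Ordinal Hs)) /=; last by rewrite eq_sym.
rewrite addnA; exact: leq_addr.
Qed.

Lemma row_lower (T : nat -> nat -> nat) r v m m0 :
  m0 <= m -> (forall j, j < m0 -> T r j = v) ->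
  m0 <= \sum_(j < m) (T r j == v).
Proof.
move=> Hm H.
rewrite -(big_mkord xpredT (fun j => nat_of_bool (T r j == v))).
rewrite (@big_cat_nat _ _ _ m0 0 m) /=; last by []; last by [].
have -> : \sum_(0 <= j < m0) (T r j == v) = \sum_(0 <= j < m0) 1.
  apply: eq_big_nat => j /andP [_ Hj]; by rewrite H // eqxx.
rewrite sum_nat_const_nat; lia.
Qed.

Lemma row_one (T : nat -> nat -> nat) r v m j0 :
  j0 < m -> T r j0 = v -> 1 <= \sum_(j < m) (T r j == v).
Proof.
move=> Hj HT; rewrite (bigD1 (Ordinal Hj)) //= HT eqxx; exact: leq_addr.
Qed.


Lemma row_bound a (T : nat -> nat -> nat) : is_comp_tableau a T ->
  forall i j, in_diagram a i j -> T i j <= T i 0.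
Proof.
move=> [_ [H1 _]] i; elim=> [|j IH] Hd //.
have Hd' : in_diagram a i j by move: Hd; rewrite /in_diagram => /andP[-> ?]; lia.
exact: leq_trans (H1 _ _ Hd) (IH Hd').
Qed.

Lemma col0 a g (T : nat -> nat -> nat) : is_composition a -> size g = size a ->
  is_comp_tableau a T -> has_content a T g ->
  forall i, i < size a -> T i 0 = i.+1.
Proof.
move=> Ha Hs HT HC.
have Hd0 : forall i, i < size a -> in_diagram a i 0.
  move=> i Hi; rewrite /in_diagram Hi /=.
  exact: (allP Ha) _ (mem_nth 0 Hi).
case: HT => [Hpos [_ [H2 _]]]; case: HC => [_ Hrng].
have up : forall i, i < size a -> i.+1 <= T i 0.
  elim=> [|i IH] Hi; first exact: Hpos _ _ (Hd0 _ Hi).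
  have := H2 i Hi; have := IH (ltnW Hi); lia.
have down : forall d i, i + d = (size a).-1 -> i < size a -> T i 0 + d <= size a.
  elim=> [|d IH] i Hid Hi.
    have := Hrng _ _ (Hd0 _ Hi); lia.
  have Hi1 : i.+1 < size a by lia.
  have := H2 i Hi1; have := IH i.+1 ltac:(lia) Hi1; lia.
move=> i Hi; have := up i Hi; have := down ((size a).-1 - i) i ltac:(lia) Hi; lia.
Qed.

Lemma col_distinct a g (T : nat -> nat -> nat) : is_composition a -> size g = size a ->
  is_comp_tableau a T -> has_content a T g ->
  forall i j k, i < j -> in_diagram a i k -> in_diagram a j k -> T i k <> T j k.
Proof.
move=> Ha Hs HT HC i j k Hij Hi Hj Heq.
have H0 := col0 _ _ _ Ha Hs HT HC.
case: (HT) => [_ [H1 [_ H3]]].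
case: k Hi Hj Heq => [|k] Hi Hj Heq.
  move: Hi Hj; rewrite /in_diagram => /andP[Hi _] /andP[Hj _].
  move: Heq; rewrite !H0 //; lia.
have [Hc1 Hc2] := H3 i j k.+1 Hij Hi Hj.
case: (leqP (nth 0 a j) (nth 0 a i)) => Hle.
  have Hk := H1 i k Hi.
  case: (Hc1 Hle isT) => /=; lia.
have Hj2 : in_diagram a j k.+2.
  move: Hi Hj; rewrite /in_diagram => /andP[_ ?] /andP[-> _]; lia.
have Hk := H1 j k.+1 Hj2.
case: (Hc2 Hle); lia.
Qed.

Lemma sum_eq_pointwise (f g : nat -> nat) n :
  (forall i, i < n -> f i <= g i) -> \sum_(i < n) f i = \sum_(i < n) g i ->
  forall r, r < n -> f r = g r.
Proof.
move=> Hle Hs r Hr; apply/eqP; rewrite eqn_leq Hle //=; rewrite leqNgt; apply/negP => Hlt.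
have := strict_sum _ _ _ _ Hle Hr Hlt; rewrite Hs ltnn //.
Qed.

Lemma cols_own a g (T : nat -> nat -> nat) : is_composition a -> perm_eq a g ->
  is_comp_tableau a T -> has_content a T g ->
  forall k i j, in_diagram a i j -> j < k -> T i j = i.+1.
Proof.
move=> Ha Hp HT HC.
have Hs : size g = size a by rewrite (perm_size Hp).
have H0 := col0 _ _ _ Ha Hs HT HC.
have Hdist := col_distinct _ _ _ Ha Hs HT HC.
have Hrb := row_bound _ _ HT.
have Hcnt : forall i, i < size a -> count_entry a T i.+1 = nth 0 g i.
  move=> i Hi; case: HC => [Hc _]; rewrite Hc // Hs; apply/andP; split; lia.
case: (HT) => [Hpos [H1 [_ H3]]].
elim=> [|k IH] i j Hd Hjk; first by [].
case: (ltnP j k) => Hjk'; first exact: IH.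
have Ej : j = k by lia.
subst j; clear Hjk Hjk'.
case: k IH Hd => [|k] IH Hd.
  by apply: H0; move: Hd; rewrite /in_diagram => /andP[].
suff key : forall x j, in_diagram a j k.+1 -> T j k.+1 = x -> x = j.+1.
  exact: key.
clear i Hd.
elim/ltn_ind => x IHx j Hdj Hx.
have Hjn : j < size a by move: Hdj; rewrite /in_diagram => /andP[].
have Hjl : k.+1 < nth 0 a j by move: Hdj; rewrite /in_diagram => /andP[].
have Hxle : x <= j.+1 by rewrite -Hx -(H0 j Hjn); exact: Hrb.
have Hxpos : 0 < x by rewrite -Hx; exact: Hpos.
apply/eqP; rewrite eqn_leq Hxle /= leqNgt; apply/negP => Hxlt.
set r := x.-1.
have Hrj : r < j by rewrite /r; lia.
have Hrn : r < size a by lia.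
have Hrlen : 0 < nth 0 a r by exact: (allP Ha) _ (mem_nth 0 Hrn).
have Ex : x = r.+1 by rewrite /r; lia.
case: (ltngtP (nth 0 a r) k.+1) => Hcmp.
-
  pose f i := minn (nth 0 a i) k.+1.
  pose h i := minn (nth 0 g i) k.+1.
  have Hsum : \sum_(i < size a) f i = \sum_(i < size a) h i.
    rewrite /f /h (perm_sum (fun y => minn y k.+1) _ _ Hp) Hs //.
  have Hfh : forall i, i < size a -> f i <= h i.
    move=> i Hi; rewrite /f /h -Hcnt //.
    have : minn (nth 0 a i) k.+1 <= \sum_(j < nth 0 a i) (T i j == i.+1).
      apply: row_lower; first exact: geq_minl.
      move=> j' Hj'; apply: IH; last by lia.
      rewrite /in_diagram Hi /=; lia.
    have := row_le _ T i.+1 _ Hi; lia.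
  have := sum_eq_pointwise _ _ _ Hfh Hsum _ Hrn.
  rewrite /f /h -Hcnt //.
  have Hrow : nth 0 a r <= \sum_(j < nth 0 a r) (T r j == r.+1).
    apply: row_lower => // j' Hj'; apply: IH; last by lia.
    rewrite /in_diagram Hrn /=; lia.
  have Hone : 1 <= \sum_(j' < nth 0 a j) (T j j' == r.+1).
    apply: (row_one _ _ _ _ _ Hjl); by rewrite Hx.
  have Hne : r != j by rewrite neq_ltn Hrj.
  have := row2_le _ T r.+1 _ _ Hrn Hjn Hne; lia.
-
  have Hdr : in_diagram a r k.+1 by rewrite /in_diagram Hrn.
  have Hy := Hdist r j k.+1 Hrj Hdr Hdj.
  have Hyle : T r k.+1 <= T r k := H1 r k Hdr.
  have Hrk : T r k = r.+1 by apply: IH => //; rewrite /in_diagram Hrn /=; lia.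
  have Hylt : T r k.+1 < x by lia.
  have := IHx _ Hylt r Hdr erefl; lia.
-
  have Hdr : in_diagram a r k by rewrite /in_diagram Hrn /=; lia.
  have Hdj' : in_diagram a j k by rewrite /in_diagram Hjn /=; lia.
  have [_ Hc2] := H3 r j k Hrj Hdr Hdj'.
  have Hrk : T r k = r.+1 by apply: IH.
  have Hjk : T j k = j.+1 by apply: IH.
  case: (Hc2 ltac:(lia)); lia.
Qed.

Theorem lemma5p2 (alpha gamma : seq nat) :
  is_composition alpha -> is_composition gamma ->
  comp_partition alpha = comp_partition gamma -> alpha <> gamma ->
  ~ (exists T : nat -> nat -> nat,
       is_comp_tableau alpha T /\ has_content alpha T gamma).
Proof.
move=> Ha _ Hpart Hne [T [HT HC]]; apply: Hne.
have Hp : perm_eq alpha gamma.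
  have := perm_refl (comp_partition alpha).
  by rewrite {2}Hpart /comp_partition perm_sort (perm_sym) perm_sort perm_sym.
have Hs : size gamma = size alpha by rewrite (perm_size Hp).
have Hown := cols_own _ _ _ Ha Hp HT HC.
have Hcnt : forall i, i < size alpha -> count_entry alpha T i.+1 = nth 0 gamma i.
  move=> i Hi; case: HC => [Hc _]; rewrite Hc // Hs; apply/andP; split; lia.
have Hsum : \sum_(i < size alpha) nth 0 alpha i = \sum_(i < size alpha) nth 0 gamma i.
  by rewrite (perm_sum id _ _ Hp) Hs.
have Hfh : forall i, i < size alpha -> nth 0 alpha i <= nth 0 gamma i.
  move=> i Hi; rewrite -Hcnt //.
  have : nth 0 alpha i <= \sum_(j < nth 0 alpha i) (T i j == i.+1).
    apply: row_lower => // j' Hj'; apply: (Hown j'.+1) => //.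
    by rewrite /in_diagram Hi.
  have := row_le _ T i.+1 _ Hi; lia.
apply: (@eq_from_nth _ 0); first by rewrite Hs.
move=> i Hi; exact: sum_eq_pointwise _ _ _ Hfh Hsum i Hi.
Qed.
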